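(* For the Chern connection $\nabla_E$ of a finitely generated projective holomorphic left module $E$ with non-degenerate hermitian metric (as in the context), the components of its curvature $R_E=({\rm d}\otimes\mathrm{id}-\mathrm{id}\wedge\nabla_E)\nabla_E:E\to\Omega^2\otimes_AE$ in $\Omega^{0,2}\otimes_AE$ and in $\Omega^{2,0}\otimes_AE$ vanish.
   Context: $A$ is a $*$-algebra with $*$-calculus and integrable almost complex structure ($\Omega^n=\oplus_{p+q=n}\Omega^{p,q}$, ${\rm d}=\partial+\overline\partial$, $\partial^2=\overline\partial^2=0$, $\wedge$ respecting bidegree, $*$ exchanging $\Omega^{1,0},\Omega^{0,1}$). $E$ is a left $A$-module, finitely generated projective, with holomorphic structure $\overline\partial_E:E\to\Omega^{0,1}\otimes_AE$ ($\overline\partial_E(a.e)=\overline\partial a\otimes e+a.\overline\partial_Ee$, and $(\overline\partial\otimes\mathrm{id}-\mathrm{id}\wedge\overline\partial_E)\overline\partial_E=0$), and $\langle,\rangle:E\otimes_A\overline E\to A$ is a non-degenerate hermitian inner product (bimodule map with $\langle e,\overline f\rangle^*=\langle f,\overline e\rangle$, induced by a bimodule isomorphism $\overline E\to{}_A{\rm Hom}(E,A)$). The Chern connection is the unique left connection $\nabla_E:E\to\Omega^1\otimes_AE$ that preserves the metric (${\rm d}\langle e,\overline f\rangle=(\mathrm{id}\otimes\langle,\rangle)(\nabla_Ee\otimes\overline f)+(\langle,\rangle\otimes\mathrm{id})(e\otimes\tilde\nabla\overline f)$, $\tilde\nabla(\overline f)=\overline g\otimes\kappa^*$ when $\nabla_Ef=\kappa\otimes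 g$) and satisfies $(\pi^{0,1}\otimes\mathrm{id})\nabla_E=\overline\partial_E$. *)

(* Defs.v *)
From HB Require Import structures.
From mathcomp Require Import all_boot all_order all_algebra.
Set Implicit Arguments. Unset Strict Implicit. Unset Printing Implicit Defensive.
Import Order.TTheory GRing.Theory Num.Theory.
Local Open Scope ring_scope.

Definition is_add (U V : zmodType) (f : U -> V) : Prop :=
  forall x y, f (x + y) = f x + f y.

Definition llinear (A : pzRingType) (U V : lmodType A) (f : U -> V) : Prop :=
  is_add f /\ forall a x, f (a *: x) = a *: f x.

Definition is_bimod (A : pzRingType) (M : lmodType A) (ra : M -> A -> M) : Prop :=
  [/\ forall x y a, ra (x + y) a = ra x a + ra y a,
      forall x a b, ra x (a + b) = ra x a + ra x b,
      forall x a b, ra x (a * b) = ra (ra x a) b,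
      forall x, ra x 1 = x
    & forall a x b, ra (a *: x) b = a *: ra x b].

Definition bimod_map (A : pzRingType) (M : lmodType A) (ra : M -> A -> M)
  (p : M -> M) : Prop :=
  [/\ is_add p, forall a x, p (a *: x) = a *: p x & forall x a, p (ra x a) = ra (p x) a].

(* [T] together with [t : M -> N -> T] is the tensor product M (x)_A N
   (M a right A-module via [ra], N a left A-module), given by its universal
   property: [t] is biadditive and A-balanced, and every biadditive balanced
   map into a Z-module factors uniquely through an additive map on [T]. *)
Definition biadd_bal (A : pzRingType) (M : lmodType A) (ra : M -> A -> M)
  (N : lmodType A) (Z : zmodType) (f : M -> N -> Z) : Prop :=
  [/\ forall m m' n, f (m + m') n = f m n + f m' n,
      forall m n n', f m (n + n') = f m n + f m n'
    & forall m a n, f (ra m a) n = f m (a *: n)].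

Definition is_tensor (A : pzRingType) (M : lmodType A) (ra : M -> A -> M)
  (N : lmodType A) (T : zmodType) (t : M -> N -> T) : Prop :=
  biadd_bal ra t /\
  forall (Z : zmodType) (f : M -> N -> Z), biadd_bal ra f ->
    exists g : T -> Z,
      [/\ is_add g, (forall m n, g (t m n) = f m n)
        & forall g' : T -> Z, is_add g' -> (forall m n, g' (t m n) = f m n) ->
            forall x, g' x = g x].

(* finitely generated projective left module: a direct summand (retract)
   of a finite free module A^n *)
Definition fg_projective (A : pzRingType) (E : lmodType A) : Prop :=
  exists n (s : E -> 'rV[A]_n) (p : 'rV[A]_n -> E),
    [/\ llinear s, llinear p & forall e, p (s e) = e].

(* Data of a *-algebra with a differential *-calculus, truncated in degree 2
   (Omega^0 = A, Omega^1, Omega^2), with bidegree projections. *)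
Record calc (C : numClosedFieldType) (A : algType C) := Calc {
  star : A -> A;
  Om1 : lmodType A;  ra1 : Om1 -> A -> Om1;
  Om2 : lmodType A;  ra2 : Om2 -> A -> Om2;
  d0 : A -> Om1;  d1 : Om1 -> Om2;
  wedge : Om1 -> Om1 -> Om2;
  star1 : Om1 -> Om1;  star2 : Om2 -> Om2;
  p10 : Om1 -> Om1;  p01 : Om1 -> Om1;
  p20 : Om2 -> Om2;  p11 : Om2 -> Om2;  p02 : Om2 -> Om2 }.

Arguments star {C A} c _.
Arguments Om1 {C A} c.  Arguments Om2 {C A} c.
Arguments ra1 {C A} c _ _.  Arguments ra2 {C A} c _ _.
Arguments d0 {C A} c _.  Arguments d1 {C A} c _.
Arguments wedge {C A} c _ _.
Arguments star1 {C A} c _.  Arguments star2 {C A} c _.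
Arguments p10 {C A} c _.  Arguments p01 {C A} c _.
Arguments p20 {C A} c _.  Arguments p11 {C A} c _.  Arguments p02 {C A} c _.

(* dbar on A and on Omega^1 (dbar = pi^{p,q+1} o d on Omega^{p,q}) *)
Definition dbar0 (C : numClosedFieldType) (A : algType C) (O : calc A) (a : A) : Om1 O := p01 O (d0 O a).
Definition dbar1 (C : numClosedFieldType) (A : algType C) (O : calc A) (x : Om1 O) : Om2 O :=
  p11 O (d1 O (p10 O x)) + p02 O (d1 O (p01 O x)).

Arguments dbar1 {C A} O x.

Definition int_star_calc (C : numClosedFieldType) (A : algType C) (O : calc A) : Prop :=
  let st := star O in
  let ra1 := ra1 O in let ra2 := ra2 O in
  let d0 := d0 O in let d1 := d1 O in let w := wedge O in
  let s1 := star1 O in let s2 := star2 O in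
  let p10 := p10 O in let p01 := p01 O in
  let p20 := p20 O in let p11 := p11 O in let p02 := p02 O in
   ((forall a, st (st a) = a) /\ (forall a b, st (a + b) = st a + st b) /\
    (forall a b, st (a * b) = st b * st a) /\
    (forall (k : C) a, st (k *: a) = Num.conj k *: st a)) /\
   (* A-bimodules (C acting centrally) *)
   (is_bimod ra1 /\ is_bimod ra2 /\
    (forall (k : C) x, ra1 x (k%:A) = k%:A *: x) /\
    (forall (k : C) x, ra2 x (k%:A) = k%:A *: x)) /\
   (is_add d0 /\ (forall a b, d0 (a * b) = a *: d0 b + ra1 (d0 a) b) /\
    (forall (k : C) a, d0 (k *: a) = k%:A *: d0 a) /\
    is_add d1 /\
    (forall a x, d1 (a *: x) = w (d0 a) x + a *: d1 x) /\
    (forall x a, d1 (ra1 x a) = ra2 (d1 x) a - w x (d0 a)) /\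
    (forall a, d1 (d0 a) = 0)) /\
   ((forall x x' y, w (x + x') y = w x y + w x' y) /\
    (forall x y y', w x (y + y') = w x y + w x y') /\
    (forall a x y, w (a *: x) y = a *: w x y) /\
    (forall x a y, w (ra1 x a) y = w x (a *: y)) /\
    (forall x y a, w x (ra1 y a) = ra2 (w x y) a)) /\
   ((forall x : Om1 O, exists s : seq (A * A),
         x = \sum_(q <- s) q.1 *: d0 q.2) /\
    (forall z : Om2 O, exists s : seq (A * A * A),
         z = \sum_(q <- s) q.1.1 *: w (d0 q.1.2) (d0 q.2))) /\
   ((forall x, s1 (s1 x) = x) /\ is_add s1 /\
    (forall a x, s1 (a *: x) = ra1 (s1 x) (st a)) /\
    (forall x a, s1 (ra1 x a) = st a *: s1 x) /\
    (forall a, s1 (d0 a) = d0 (st a)) /\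
    (forall z, s2 (s2 z) = z) /\ is_add s2 /\
    (forall a z, s2 (a *: z) = ra2 (s2 z) (st a)) /\
    (forall z a, s2 (ra2 z a) = st a *: s2 z) /\
    (forall x y, s2 (w x y) = - w (s1 y) (s1 x)) /\
    (forall x, s2 (d1 x) = d1 (s1 x))) /\
   (* bidegree decomposition into sub-bimodules: complete families of
      orthogonal bimodule idempotents *)
   (bimod_map ra1 p10 /\ bimod_map ra1 p01 /\
    bimod_map ra2 p20 /\ bimod_map ra2 p11 /\ bimod_map ra2 p02 /\
    (forall x, p10 x + p01 x = x) /\
    (forall x, p10 (p10 x) = p10 x /\ p01 (p01 x) = p01 x /\
               p10 (p01 x) = 0 /\ p01 (p10 x) = 0) /\
    (forall z, p20 z + p11 z + p02 z = z) /\
    (forall z, p20 (p20 z) = p20 z /\ p11 (p11 z) = p11 z /\ p02 (p02 z) = p02 z /\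
               p20 (p11 z) = 0 /\ p20 (p02 z) = 0 /\ p11 (p20 z) = 0 /\
               p11 (p02 z) = 0 /\ p02 (p20 z) = 0 /\ p02 (p11 z) = 0)) /\
   ((forall x y, p20 (w (p10 x) (p10 y)) = w (p10 x) (p10 y)) /\
    (forall x y, p11 (w (p10 x) (p01 y)) = w (p10 x) (p01 y)) /\
    (forall x y, p11 (w (p01 x) (p10 y)) = w (p01 x) (p10 y)) /\
    (forall x y, p02 (w (p01 x) (p01 y)) = w (p01 x) (p01 y))) /\
   (* integrability: d = del + dbar, del^2 = dbar^2 = 0 *)
   ((forall x, p02 (d1 (p10 x)) = 0) /\ (forall x, p20 (d1 (p01 x)) = 0) /\
    (forall a, p20 (d1 (p10 (d0 a))) = 0) /\
    (forall a, p02 (d1 (p01 (d0 a))) = 0)) /\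
   ((forall x, s1 (p10 x) = p01 (s1 x)) /\ (forall x, s1 (p01 x) = p10 (s1 x))).

(* non-degenerate hermitian inner product: inner e f stands for <e, bar f>;
   it is a bimodule map E (x)_A bar E -> A, i.e. biadditive with
   <a e, bar f> = a <e, bar f> and <e, bar (a f)> = <e, bar f> a^*,
   hermitian, and bar f |-> <-, bar f> is a bijection onto Hom_A(E, A). *)
Definition hermitian_nondeg (A : pzRingType) (st : A -> A) (E : lmodType A)
  (inner : E -> E -> A) : Prop :=
  (forall e e' f, inner (e + e') f = inner e f + inner e' f) /\
  (forall e f f', inner e (f + f') = inner e f + inner e f') /\
  (forall a e f, inner (a *: e) f = a * inner e f) /\
  (forall e a f, inner e (a *: f) = inner e f * st a) /\
  (forall e f, st (inner e f) = inner f e) /\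
  (forall f, (forall e, inner e f = 0) -> f = 0) /\
  (forall phi : E -> A, @llinear A E A^o phi -> exists f, forall e, phi e = inner e f).

(* Main.v *)
Require Import Defs.
From HB Require Import structures.
From mathcomp Require Import all_boot all_order all_algebra.
From Stdlib Require Import IndefiniteDescription.
Import Order.TTheory GRing.Theory Num.Theory.
Local Open Scope ring_scope.
Set Implicit Arguments. Unset Strict Implicit.

Lemma add0 (U V : zmodType) (f : U -> V) : is_add f -> f 0 = 0.
Proof. move=> H; have h := H 0 0; rewrite addr0 in h.
by apply: (addrI (f 0)); rewrite addr0 -h. Qed.

Lemma addN (U V : zmodType) (f : U -> V) : is_add f -> forall x, f (- x) = - f x.
Proof. move=> H x; apply/eqP; rewrite -addr_eq0 -H addNr (@add0 _ _ f H) //=. Qed.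

Lemma addB (U V : zmodType) (f : U -> V) : is_add f -> forall x y, f (x - y) = f x - f y.
Proof. by move=> H x y; rewrite H addN. Qed.

Lemma add_sum (U V : zmodType) (f : U -> V) : is_add f ->
  forall (I : Type) (r : seq I) (P : pred I) (F : I -> U),
  f (\sum_(i <- r | P i) F i) = \sum_(i <- r | P i) f (F i).
Proof. move=> H I r P F; by rewrite (big_morph f H (@add0 _ _ f H)). Qed.

Lemma is_addD (U V : zmodType) (f g : U -> V) : is_add f -> is_add g -> is_add (fun x => f x + g x).
Proof. by move=> Hf Hg x y; rewrite Hf Hg addrACA. Qed.
Lemma is_addB (U V : zmodType) (f g : U -> V) : is_add f -> is_add g -> is_add (fun x => f x - g x).
Proof. by move=> Hf Hg x y; rewrite Hf Hg opprD addrACA. Qed.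
Lemma is_addN (U V : zmodType) (f : U -> V) : is_add f -> is_add (fun x => - f x).
Proof. by move=> Hf x y; rewrite Hf opprD. Qed.
Lemma is_addC (U V W : zmodType) (f : U -> V) (g : V -> W) : is_add f -> is_add g -> is_add (fun x => g (f x)).
Proof. by move=> Hf Hg x y; rewrite Hf Hg. Qed.
Lemma is_add0 (U V : zmodType) : is_add (fun _ : U => (0 : V)).
Proof. by move=> x y; rewrite addr0. Qed.

Lemma tens_ext (A : pzRingType) (M N : lmodType A) (ra : M -> A -> M) (T : zmodType)
  (t : M -> N -> T) : is_tensor ra t -> forall (Z : zmodType) (g1 g2 : T -> Z),
  is_add g1 -> is_add g2 -> (forall m n, g1 (t m n) = g2 (t m n)) -> forall x, g1 x = g2 x.
Proof.
move=> [[Hl Hr Hb] Hu] Z g1 g2 H1 H2 Heq x.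
have Hf : biadd_bal ra (fun m n => g1 (t m n)).
  by split=> *; rewrite ?Hl ?Hr ?Hb ?H1.
have [g [_ _ Hg]] := Hu Z _ Hf.
by rewrite (Hg g1 H1) // (Hg g2 H2).
Qed.

Lemma tens_lift (A : pzRingType) (M N : lmodType A) (ra : M -> A -> M) (T : zmodType)
  (t : M -> N -> T) : is_tensor ra t -> forall (Z : zmodType) (f : M -> N -> Z),
  biadd_bal ra f -> {g : T -> Z | is_add g /\ forall m n, g (t m n) = f m n}.
Proof.
move=> [_ Hu] Z f Hf; apply: constructive_indefinite_description.
by have [g [? ? _]] := Hu Z f Hf; exists g.
Qed.

Lemma tens_addl (A : pzRingType) (M N : lmodType A) (ra : M -> A -> M) (T : zmodType)
  (t : M -> N -> T) : is_tensor ra t -> forall n, is_add (t ^~ n).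
Proof. by move=> [[Hl _ _] _] n x y; rewrite Hl. Qed.
Lemma tens_addr (A : pzRingType) (M N : lmodType A) (ra : M -> A -> M) (T : zmodType)
  (t : M -> N -> T) : is_tensor ra t -> forall m, is_add (t m).
Proof. by move=> [[_ Hr _] _] m x y; rewrite Hr. Qed.

Lemma inj_t (A : pzRingType) (st : A -> A) (E : lmodType A) (inner : E -> E -> A)
  (Hi : hermitian_nondeg st inner) (HE : fg_projective E)
  (M : lmodType A) (ra : M -> A -> M) (T : zmodType) (t : M -> E -> T)
  (Ht : is_tensor ra t) (N : T -> E -> M) (HNa : forall f, is_add (N ^~ f))
  (HNt : forall z g f, N (t z g) f = ra z (inner g f)) X :
  (forall f, N X f = 0) -> X = 0.
Proof.
move=> HX.
have [n [s [p [[Hsa Hss] [Hpa Hps] Hsp]]]] := HE.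
case: Hi => _ [_ [_ [_ [_ [_ Hrep]]]]].
have H1 : forall i : 'I_n, exists f : E, forall g, s g 0 i = inner g f.
  move=> i; apply: Hrep; split.
    by move=> x y; rewrite Hsa mxE.
  by move=> a x; rewrite Hss mxE.
have [F HF] := @fin_all_exists _ (fun _ => E) (fun i f => forall g, s g 0 i = inner g f) H1.
have key : forall Y, Y = \sum_(i < n) t (N Y (F i)) (p 'e_i).
  move=> Y; apply: (tens_ext Ht (g1 := id) (g2 := fun Y => \sum_(i < n) t (N Y (F i)) (p 'e_i))) => //.
    move=> x y; rewrite -big_split /=; apply: eq_bigr => i _.
    by rewrite HNa (tens_addl Ht).
  move=> z g.
  under eq_bigr => i _ do rewrite HNt.
  have [[_ _ Hb] _] := Ht.
  under eq_bigr => i _ do rewrite Hb -HF -Hps.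
  rewrite -(add_sum (tens_addr Ht z)) -(add_sum Hpa) -row_sum_delta.
  by rewrite Hsp.
rewrite (key X); apply: big1 => i _; rewrite HX.
exact: (add0 (tens_addl Ht _)).
Qed.

Theorem mainTheorem13
  (C : numClosedFieldType) (A : algType C) (O : calc A)
  (HO : int_star_calc O)
  (* E: f.g. projective left A-module with non-degenerate hermitian metric *)
  (E : lmodType A) (HE : fg_projective E)
  (inner : E -> E -> A) (Hinner : hermitian_nondeg (star O) inner)
  (* T1 = Omega^1 (x)_A E,  T2 = Omega^2 (x)_A E, with their left A-actions *)
  (T1 T2 : lmodType A) (t1 : Om1 O -> E -> T1) (t2 : Om2 O -> E -> T2)
  (Ht1 : is_tensor (ra1 O) t1) (Ht2 : is_tensor (ra2 O) t2)
  (Ht1l : forall a x e, a *: t1 x e = t1 (a *: x) e)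
  (Ht2l : forall a z e, a *: t2 z e = t2 (a *: z) e)
  (* the maps pi^{0,1} (x) id, pi^{2,0} (x) id, pi^{0,2} (x) id *)
  (P01 : T1 -> T1) (HP01 : is_add P01)
  (HP01t : forall x e, P01 (t1 x e) = t1 (p01 O x) e)
  (P20 P02 : T2 -> T2) (HP20 : is_add P20) (HP02 : is_add P02)
  (HP20t : forall z e, P20 (t2 z e) = t2 (p20 O z) e)
  (HP02t : forall z e, P02 (t2 z e) = t2 (p02 O z) e)
  (* W x = (x /\ -) : Omega^1 (x)_A E -> Omega^2 (x)_A E *)
  (W : Om1 O -> T1 -> T2) (HW : forall x, is_add (W x))
  (HWt : forall x y e, W x (t1 y e) = t2 (wedge O x y) e)
  (* holomorphic structure dbar_E : E -> Omega^{0,1} (x)_A E *)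
  (dbarE : E -> T1) (HdbarE : is_add dbarE)
  (HdbarEl : forall a e, dbarE (a *: e) = t1 (dbar0 O a) e + a *: dbarE e)
  (HdbarE01 : forall e, P01 (dbarE e) = dbarE e)
  (Hol : T1 -> T2) (HHol : is_add Hol)
  (HHolt : forall x e, Hol (t1 x e) = t2 (dbar1 O x) e - W x (dbarE e))
  (Hflat : forall e, Hol (dbarE e) = 0)
  (* the Chern connection *)
  (nabla : E -> T1) (Hnabla : is_add nabla)
  (Hnablal : forall a e, nabla (a *: e) = t1 (d0 O a) e + a *: nabla e)
  (Hnabla01 : forall e, P01 (nabla e) = dbarE e)
  (M1 : T1 -> E -> Om1 O) (HM1 : forall f, is_add (M1 ^~ f))
  (HM1t : forall x g f, M1 (t1 x g) f = ra1 O x (inner g f))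
  (M2 : E -> T1 -> Om1 O) (HM2 : forall e, is_add (M2 e))
  (HM2t : forall e k g, M2 e (t1 k g) = inner e g *: star1 O k)
  (Hmetric : forall e f, d0 O (inner e f) = M1 (nabla e) f + M2 e (nabla f))
  (* curvature R_E = (d (x) id - id /\ nabla) nabla *)
  (Rc : T1 -> T2) (HRc : is_add Rc)
  (HRct : forall x f, Rc (t1 x f) = t2 (d1 O x) f - W x (nabla f)) :
  forall e, P02 (Rc (nabla e)) = 0 /\ P20 (Rc (nabla e)) = 0.

Proof.
move: HO; rewrite /int_star_calc => HO.
case: HO => [[st_inv [st_add [st_mul st_scale]]] [[bim1 [bim2 [rac1 rac2]]] [[d0add [d0leib [d0scal [d1add [d1l [d1r d1d0]]]]]] [[wl [wr [wsl [wbal wra]]]] [[gen1 gen2] [[s1inv [s1add [s1l [s1r [s1d0 [s2inv [s2add [s2l [s2r [s2w s2d1]]]]]]]]]] [[bp10 [bp01 [bp20 [bp11 [bp02 [p1sum [p1id [p2sum p2id]]]]]]]] [[w20 [w11a [w11b w02]]] [[i02 [i20 [i20a i02a]]] [s1p10 s1p01]]]]]]]]]].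
case: bp02 => p02a p02l p02r; case: bp20 => p20a p20l p20r.
case: bp11 => p11a _ _; case: bp10 => p10a _ _; case: bp01 => p01a _ _.
case: bim1 => ra1l ra1r ra1m _ _; case: bim2 => ra2l ra2r ra2m _ _.
have P20_20 z : p20 O (p20 O z) = p20 O z by case: (p2id z) => [-> _].
have P02_02 z : p02 O (p02 O z) = p02 O z by case: (p2id z) => [_ [_ [-> _]]].
have P20_11 z : p20 O (p11 O z) = 0 by case: (p2id z) => [_ [_ [_ [-> _]]]].
have P20_02 z : p20 O (p02 O z) = 0 by case: (p2id z) => [_ [_ [_ [_ [-> _]]]]].
have P02_20 z : p02 O (p20 O z) = 0 by case: (p2id z) => [_ [_ [_ [_ [_ [_ [_ [-> _]]]]]]]].
have P02_11 z : p02 O (p11 O z) = 0 by case: (p2id z) => [_ [_ [_ [_ [_ [_ [_ [_ ->]]]]]]]].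
have F1 x y : p02 O (wedge O x y) = wedge O (p01 O x) (p01 O y).
  have -> : wedge O x y = wedge O (p10 O x + p01 O x) (p10 O y + p01 O y) by rewrite !p1sum.
  rewrite !wl !wr !p02a -[wedge O (p10 O x) (p10 O y)]w20 -[wedge O (p10 O x) (p01 O y)]w11a.
  rewrite -[wedge O (p01 O x) (p10 O y)]w11b -[wedge O (p01 O x) (p01 O y)]w02.
  by rewrite !(P02_20, P02_11, P02_02) !(add0r, addr0).
have F2 x y : p20 O (wedge O x y) = wedge O (p10 O x) (p10 O y).
  have -> : wedge O x y = wedge O (p10 O x + p01 O x) (p10 O y + p01 O y) by rewrite !p1sum.
  rewrite !wl !wr !p20a -[wedge O (p10 O x) (p10 O y)]w20 -[wedge O (p10 O x) (p01 O y)]w11a.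
  rewrite -[wedge O (p01 O x) (p10 O y)]w11b -[wedge O (p01 O x) (p01 O y)]w02.
  by rewrite !(P20_20, P20_11, P20_02) !(add0r, addr0).
have F3 x : p02 O (d1 O x) = p02 O (d1 O (p01 O x)).
  by rewrite -{1}(p1sum x) d1add p02a i02 add0r.
have F4 x : dbar1 O (p01 O x) = p02 O (d1 O (p01 O x)).
  rewrite /dbar1; case: (p1id x) => _ [H1 [H2 _]].
  by rewrite H2 H1 (add0 d1add) (add0 p11a) add0r.
have L1 x : forall Y, P02 (W x Y) = W (p01 O x) (P01 Y).
  apply: (tens_ext Ht1); [exact: is_addC (HW x) HP02 | exact: is_addC HP01 (HW _)|].
  by move=> y e; rewrite HWt HP02t HP01t HWt F1.
have L2 : forall Y, P02 (Rc Y) = Hol (P01 Y).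
  apply: (tens_ext Ht1); [exact: is_addC HRc HP02 | exact: is_addC HP01 HHol|].
  by move=> x f; rewrite HRct (addB HP02) HP02t L1 HP01t HHolt Hnabla01 F4 F3.
have Part1 e : P02 (Rc (nabla e)) = 0 by rewrite L2 Hnabla01 Hflat.
have [Hi1 [Hi2 [Hi3 [Hi4 [Hi5 _]]]]] := Hinner.
have Wr x : is_add (wedge O x) by move=> u v; exact: wr.
have Wl y : is_add (fun u => wedge O u y) by move=> u v; exact: wl.
have F5 z : p20 O (star2 O z) = star2 O (p02 O z).
  have [s ->] := gen2 z.
  elim: s => [|q s IH].
    by rewrite !big_nil (add0 s2add) (add0 p02a) (add0 p20a) (add0 s2add).
  rewrite !big_cons s2add p20a p02a s2add IH; congr (_ + _).
  case: q => [[a x] y] /=.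
  by rewrite s2l p20r s2w (addN p20a) F2 p02l F1 s2l s2w !s1p01.
have [N2 [HN2a HN2t]] : exists N2 : T2 -> E -> Om2 O,
   (forall f, is_add (N2 ^~ f)) /\ forall z g f, N2 (t2 z g) f = ra2 O z (inner g f).
  have Hb f : biadd_bal (ra2 O) (fun z g => ra2 O z (inner g f)).
    by split=> *; rewrite ?ra2l ?Hi1 ?ra2r ?Hi3 ?ra2m.
  exists (fun X f => sval (tens_lift Ht2 (Hb f)) X); split.
    by move=> f; case: (tens_lift Ht2 (Hb f)) => g [].
  by move=> z g f; case: (tens_lift Ht2 (Hb f)) => g' [_ H] /=; rewrite H.
have [N3 [HN3a HN3t]] : exists N3 : E -> T2 -> Om2 O,
   (forall e, is_add (N3 e)) /\ forall e z g, N3 e (t2 z g) = inner e g *: star2 O z.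
  have Hb e : biadd_bal (ra2 O) (fun z g => inner e g *: star2 O z).
    by split=> *; rewrite ?s2add ?scalerDr ?Hi2 ?scalerDl ?s2r ?Hi4 ?scalerA.
  exists (fun e X => sval (tens_lift Ht2 (Hb e)) X); split.
    by move=> e; case: (tens_lift Ht2 (Hb e)) => g [].
  by move=> e z g; case: (tens_lift Ht2 (Hb e)) => g' [_ H] /=; rewrite H.
have M1a Y g g' : M1 Y (g + g') = M1 Y g + M1 Y g'.
  move: Y; apply: (tens_ext Ht1); [exact: HM1 | exact: is_addD (HM1 g) (HM1 g') |].
  by move=> x h; rewrite !HM1t Hi2 ra1r.
have M1s Y a g : M1 Y (a *: g) = ra1 O (M1 Y g) (star O a).
  move: Y; apply: (tens_ext Ht1); [exact: HM1 | |].
    by move=> u v; rewrite HM1 ra1l.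
  by move=> x h; rewrite !HM1t Hi4 ra1m.
have [B [HBt HBa]] : exists B : T1 -> T1 -> Om2 O,
  (forall Y k g, B Y (t1 k g) = wedge O (M1 Y g) (star1 O k)) /\ (forall Y, is_add (B Y)).
  have Hb Y : biadd_bal (ra1 O) (fun k g => wedge O (M1 Y g) (star1 O k)).
    by split=> *; rewrite ?s1add ?wr ?M1a ?wl ?s1r ?M1s ?wbal.
  exists (fun Y => sval (tens_lift Ht1 (Hb Y))); split.
    by move=> Y k g; case: (tens_lift Ht1 (Hb Y)) => g' [_ H] /=; rewrite H.
  by move=> Y; case: (tens_lift Ht1 (Hb Y)) => g [].
have Bl x h : forall Z, B (t1 x h) Z = wedge O x (M2 h Z).
  apply: (tens_ext Ht1); [exact: HBa | exact: is_addC (HM2 h) (Wr x)|].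
  by move=> k g; rewrite HBt HM1t HM2t wbal.
have By Y Y' : forall Z, B (Y + Y') Z = B Y Z + B Y' Z.
  apply: (tens_ext Ht1); [exact: HBa | exact: is_addD (HBa Y) (HBa Y')|].
  by move=> k g; rewrite !HBt HM1 wl.
have N2W x f : forall Y, N2 (W x Y) f = wedge O x (M1 Y f).
  apply: (tens_ext Ht1); [exact: is_addC (HW x) (HN2a f) | exact: is_addC (HM1 f) (Wr x) |].
  by move=> y h; rewrite HWt HN2t HM1t wra.
have N3W e k : forall Y, N3 e (W k Y) = - wedge O (M2 e Y) (star1 O k).
  apply: (tens_ext Ht1); [exact: is_addC (HW k) (HN3a e) | exact: is_addN (is_addC (HM2 e) (Wl _)) |].
  by move=> y h; rewrite HWt HN3t s2w HM2t wsl scalerN.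
have Fid f : forall Y, d1 O (M1 Y f) = N2 (Rc Y) f - B Y (nabla f).
  apply: (tens_ext Ht1).
  - exact: is_addC (HM1 f) d1add.
  - exact: is_addB (is_addC HRc (HN2a f)) (fun Y Y' => By Y Y' (nabla f)).
  - move=> x h; rewrite HM1t d1r Bl HRct (addB (HN2a f)) HN2t N2W Hmetric wr.
    by rewrite opprD addrA.
have Gid e : forall Z, d1 O (M2 e Z) = N3 e (Rc Z) + B (nabla e) Z.
  apply: (tens_ext Ht1).
  - exact: is_addC (HM2 e) d1add.
  - exact: is_addD (is_addC HRc (HN3a e)) (HBa _).
  - move=> k g; rewrite HM2t d1l Hmetric wl HRct (addB (HN3a e)) HN3t N3W HBt s2d1 opprK.
    by rewrite addrC addrA addrAC.
have key e f : N2 (Rc (nabla e)) f = - N3 e (Rc (nabla f)).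
  have := d1d0 (inner e f); rewrite Hmetric d1add Fid Gid addrACA addNr addr0.
  by move=> /eqP; rewrite addr_eq0 => /eqP.
have P20N2 f : forall X, p20 O (N2 X f) = N2 (P20 X) f.
  apply: (tens_ext Ht2); [exact: is_addC (HN2a f) p20a | exact: is_addC HP20 (HN2a f)|].
  by move=> z g; rewrite HN2t HP20t HN2t p20r.
have P20N3 e : forall X, p20 O (N3 e X) = N3 e (P02 X).
  apply: (tens_ext Ht2); [exact: is_addC (HN3a e) p20a | exact: is_addC HP02 (HN3a e)|].
  by move=> z g; rewrite HN3t HP02t HN3t p20l F5.
move=> e; split; first exact: Part1.
apply: (inj_t Hinner HE Ht2 HN2a HN2t) => f.
by rewrite -P20N2 key (addN p20a) P20N3 Part1 (add0 (HN3a e)) oppr0.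
Qed.
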